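(* Let $n\ge2$ and let $G=\{G_1,\ldots,G_t\}\subseteq\mathrm{H}(n,\mathbb{Q}(\mathrm{i}))$ be such that every $G_i$ is non-redundant. Suppose there exist $M_1,M_2,M_3,M_4\in G$ such that $[M_1,M_2]$ and $[M_3,M_4]$ do not have the same angle, i.e. both are nonzero and $[M_1,M_2]\notin\mathbb{R}\cdot[M_3,M_4]$. Then $\boldsymbol{I}_n\in\langle G\rangle$.
   Context: $\mathbb{Q}(\mathrm{i})=\{a+b\mathrm{i}\mid a,b\in\mathbb{Q}\}$. $\mathrm{H}(n,\mathbb{Q}(\mathrm{i}))$ is the set of $n\times n$ matrices $M=\begin{pmatrix}1&\boldsymbol{m}_1^T&m_3\\ \boldsymbol{0}&\boldsymbol{I}_{n-2}&\boldsymbol{m}_2\\ 0&\boldsymbol{0}^T&1\end{pmatrix}$ with $\boldsymbol{m}_1,\boldsymbol{m}_2\in\mathbb{Q}(\mathrm{i})^{n-2}$, $m_3\in\mathbb{Q}(\mathrm{i})$; write $\psi(M)=(\boldsymbol{m}_1,\boldsymbol{m}_2,m_3)$. For $\psi(M)=(\boldsymbol{a},\boldsymbol{b},c)$, $\psi(M')=(\boldsymbol{a}',\boldsymbol{b}',c')$, the commutator is the scalar $[M,M']=\boldsymbol{a}^T\boldsymbol{b}'-\boldsymbol{a}'^T\boldsymbol{b}\in\mathbb{Q}(\mathrm{i})$. Two commutators have the same angle if they are real multiples of each other's direction, i.e. $[M_1,M_2]=r\exp(\mathrm{i}\gamma)$ and $[M_3,M_4]=r'\exp(\mathrm{i}\gamma)$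 for some $r,r'\in\mathbb{R}$ and $\gamma\in[0,\pi)$; by convention a zero commutator has the same angle as every commutator. With $\psi(G_j)=(\boldsymbol{a}_j,\boldsymbol{b}_j,c_j)$, a generator $G_i$ is non-redundant if there exists $\boldsymbol{x}\in\mathbb{N}^t$ with $\boldsymbol{x}(i)\ge1$, $\sum_j\boldsymbol{x}(j)\boldsymbol{a}_j=\boldsymbol{0}$ and $\sum_j\boldsymbol{x}(j)\boldsymbol{b}_j=\boldsymbol{0}$ (equivalently, $G_i$ has a nonzero $i$-th component in some minimal solution of this homogeneous system). $\langle G\rangle$ is the semigroup of finite nonempty products of elements of $G$. *)

(* Defs.v *)
From mathcomp Require Import all_boot all_order all_algebra all_field.
Set Implicit Arguments. Unset Strict Implicit. Unset Printing Implicit Defensive.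
Import Order.TTheory GRing.Theory Num.Theory.
Local Open Scope ring_scope.

Definition in_Qi (z : algC) : bool := ('Re z \in Crat) && ('Im z \in Crat).

(* Matrices are n x n with n = m.+2 (so n >= 2); index 0 is ord0 and n-1 is ord_max.
   The "middle" indices 1..n-2 are the k with 0 < k < m.+1. *)
Definition mid_idx (m : nat) (k : 'I_m.+2) : bool := (0 < k)%N && (k < m.+1)%N.

Definition in_H (m : nat) (M : 'M[algC]_m.+2) : Prop :=
  (forall i j, in_Qi (M i j)) /\
  (forall i, M i i = 1) /\
  (forall i j : 'I_m.+2, i != j ->
     ~~ ((i < j)%N && ((i == ord0) || (j == ord_max))) -> M i j = 0).

(* psi(M) = (a, b, c): a k = M 0 k, b k = M k (n-1) for middle k, c = M 0 (n-1). *)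
Definition comm (m : nat) (M M' : 'M[algC]_m.+2) : algC :=
  \sum_(k : 'I_m.+2 | mid_idx k) (M ord0 k * M' k ord_max - M' ord0 k * M k ord_max).

Definition same_angle (z w : algC) : Prop :=
  z = 0 \/ w = 0 \/ exists r : algC, r \is Num.real /\ z = r * w.

Definition non_redundant (m t : nat) (G : 'I_t -> 'M[algC]_m.+2) (i : 'I_t) : Prop :=
  exists x : 'I_t -> nat, (1 <= x i)%N /\
    (forall k : 'I_m.+2, mid_idx k -> \sum_(j < t) (x j)%:R * G j ord0 k = 0) /\
    (forall k : 'I_m.+2, mid_idx k -> \sum_(j < t) (x j)%:R * G j k ord_max = 0).

Definition word_prod (m t : nat) (G : 'I_t -> 'M[algC]_m.+2) (s : seq 'I_t) : 'M[algC]_m.+2 :=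
  foldr (fun i A => G i *m A) 1%:M s.

Definition in_semigroup (m t : nat) (G : 'I_t -> 'M[algC]_m.+2) (A : 'M[algC]_m.+2) : Prop :=
  exists s : seq 'I_t, s <> [::] /\ word_prod G s = A.

(* Main.v *)
Require Import Defs.
From HB Require Import structures.
From mathcomp Require Import all_boot all_order all_algebra all_field.
From mathcomp Require Import ring zify.
Import Order.TTheory GRing.Theory Num.Theory.
Local Open Scope ring_scope.
Set Implicit Arguments. Unset Strict Implicit. Unset Printing Implicit Defensive.
Lemma Qi1 : in_Qi 1.
Proof.
have r1 : (1:algC) \is Num.real by rewrite realE ler01.
by rewrite /in_Qi (Creal_ReP _ r1) (Creal_ImP _ r1) rpred1 rpred0.
Qed.
Lemma QiB x y : in_Qi x -> in_Qi y -> in_Qi (x - y).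
Proof.
move=> /andP[? ?] /andP[? ?]; rewrite /in_Qi !raddfB /=.
by rewrite !rpredB.
Qed.
Lemma QiM x y : in_Qi x -> in_Qi y -> in_Qi (x * y).
Proof.
move=> /andP[? ?] /andP[? ?]; rewrite /in_Qi ReM ImM.
by rewrite !(rpredB, rpredD, rpredM).
Qed.
Lemma Qi_subring : subring_closed in_Qi.
Proof. split; [exact: Qi1 | exact: QiB | exact: QiM]. Qed.
HB.instance Definition _ := GRing.isSubringClosed.Build algC in_Qi Qi_subring.

Definition shp m (P : 'M[algC]_m.+2) :=
  (forall i, P i i = 1) /\
  (forall i j, i != j -> i != ord0 -> j != ord_max -> P i j = 0).
Definition dot m (P Q : 'M[algC]_m.+2) :=
  \sum_(k | mid_idx k) P ord0 k * Q k ord_max.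
Definition cen m (P : 'M[algC]_m.+2) :=
  forall k, mid_idx k -> P ord0 k = 0 /\ P k ord_max = 0.

Lemma max_neq0 m : (ord_max : 'I_m.+2) != ord0.
Proof. by rewrite -val_eqE. Qed.

Lemma mid_iff m (k : 'I_m.+2) : mid_idx k = (k != ord0) && (k != ord_max).
Proof.
rewrite /mid_idx -!val_eqE /=; case: k => k /= lt.
by rewrite lt0n; congr (_ && _); rewrite ltn_neqAle -ltnS lt andbT.
Qed.

Lemma shp_mul m (P Q : 'M[algC]_m.+2) : shp P -> shp Q -> shp (P *m Q).
Proof.
move=> [P1 P0] [Q1 Q0]; split.
- move=> i; rewrite mxE (bigD1 i) //= P1 Q1 mul1r big1 ?addr0 // => l nli.
  case: (eqVneq i ord0) => [i0|i0].
    rewrite Q0 ?mulr0 //; [by rewrite -i0 | by rewrite i0 eq_sym max_neq0].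
  case: (eqVneq l ord_max) => [lm|lm].
    rewrite Q0 ?mulr0 //; first by rewrite lm max_neq0.
    by rewrite -lm eq_sym.
  rewrite P0 ?mul0r //; by rewrite eq_sym.
- move=> i j nij i0 jm; rewrite mxE big1 // => l _.
  case: (eqVneq l i) => [->|li]; first by rewrite Q0 ?mulr0.
  case: (eqVneq l ord_max) => [->|lm]; first by rewrite Q0 ?mulr0 ?max_neq0 // eq_sym.
  by rewrite P0 ?mul0r // eq_sym.
Qed.

Lemma mul0k m (P Q : 'M[algC]_m.+2) k : shp P -> shp Q -> mid_idx k ->
  (P *m Q) ord0 k = P ord0 k + Q ord0 k.
Proof.
move=> [P1 P0] [Q1 Q0]; rewrite mid_iff => /andP[k0 km].
rewrite mxE (bigD1 ord0) //= (bigD1 k) //=.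
rewrite big1 ?addr0; first by rewrite P1 Q1 mul1r mulr1 addrC.
move=> l /andP[l0 lk]; by rewrite Q0 ?mulr0.
Qed.

Lemma mulkm m (P Q : 'M[algC]_m.+2) k : shp P -> shp Q -> mid_idx k ->
  (P *m Q) k ord_max = P k ord_max + Q k ord_max.
Proof.
move=> [P1 P0] [Q1 Q0]; rewrite mid_iff => /andP[k0 km].
rewrite mxE (bigD1 k) //= (bigD1 ord_max) //=.
rewrite big1 ?addr0.
- by rewrite P1 Q1 mul1r mulr1 addrC.
- move=> l /andP[lk lm]; by rewrite P0 ?mul0r // eq_sym.
- by apply/eqP => e; rewrite e eqxx in km.
Qed.

Lemma mul0m m (P Q : 'M[algC]_m.+2) : shp P -> shp Q ->
  (P *m Q) ord0 ord_max = P ord0 ord_max + Q ord0 ord_max + dot P Q.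
Proof.
move=> [P1 P0] [Q1 Q0].
rewrite mxE (bigD1 ord0) //= (bigD1 ord_max) ?max_neq0 //= P1 Q1 mul1r mulr1.
rewrite addrA [X in X + _ = _]addrC; congr (_ + _); rewrite /dot.
by apply: eq_bigl => l; rewrite mid_iff.
Qed.

Lemma shp1 m : shp (1%:M : 'M[algC]_m.+2).
Proof.
split=> [i|i j nij _ _]; first by rewrite mxE eqxx.
by rewrite mxE (negbTE nij).
Qed.

Lemma dotMl m (P Q R : 'M[algC]_m.+2) : shp P -> shp Q ->
  dot (P *m Q) R = dot P R + dot Q R.
Proof.
move=> sP sQ; rewrite /dot -big_split /=; apply: eq_bigr => k mk.
by rewrite mul0k // mulrDl.
Qed.

Lemma dotMr m (P Q R : 'M[algC]_m.+2) : shp P -> shp Q ->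
  dot R (P *m Q) = dot R P + dot R Q.
Proof.
move=> sP sQ; rewrite /dot -big_split /=; apply: eq_bigr => k mk.
by rewrite mulkm // mulrDr.
Qed.

Lemma dot_cenl m (P R : 'M[algC]_m.+2) : cen P -> dot P R = 0.
Proof. by move=> cP; rewrite /dot big1 // => k /cP [-> _]; rewrite mul0r. Qed.

Lemma dot_cenr m (P R : 'M[algC]_m.+2) : cen P -> dot R P = 0.
Proof. by move=> cP; rewrite /dot big1 // => k /cP [_ ->]; rewrite mulr0. Qed.

Lemma dot1l m (R : 'M[algC]_m.+2) : dot 1%:M R = 0.
Proof.
rewrite /dot big1 // => k; rewrite mid_iff => /andP[k0 _].
by rewrite mxE eq_sym (negbTE k0) mul0r.
Qed.

Lemma dot1r m (R : 'M[algC]_m.+2) : dot R 1%:M = 0.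
Proof.
rewrite /dot big1 // => k; rewrite mid_iff => /andP[_ km].
by rewrite mxE (negbTE km) mulr0.
Qed.

Fixpoint mpow m (P : 'M[algC]_m.+2) (K : nat) : 'M[algC]_m.+2 :=
  if K is K'.+1 then P *m mpow P K' else 1%:M.

Lemma shp_pow m (P : 'M[algC]_m.+2) K : shp P -> shp (mpow P K).
Proof. by move=> sP; elim: K => [|K IH] /=; [exact: shp1 | exact: shp_mul]. Qed.

Lemma pow0k m (P : 'M[algC]_m.+2) K k : shp P -> mid_idx k ->
  (mpow P K) ord0 k = K%:R * P ord0 k.
Proof.
move=> sP mk; elim: K => [|K IH] /=.
  by rewrite mxE; move: mk; rewrite mid_iff eq_sym => /andP[/negbTE -> _]; rewrite mul0r.
have sK := shp_pow K sP; rewrite mul0k // IH mulrS; ring.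
Qed.

Lemma powkm m (P : 'M[algC]_m.+2) K k : shp P -> mid_idx k ->
  (mpow P K) k ord_max = K%:R * P k ord_max.
Proof.
move=> sP mk; elim: K => [|K IH] /=.
  by rewrite mxE; move: mk; rewrite mid_iff => /andP[_ /negbTE ->]; rewrite mul0r.
have sK := shp_pow K sP; rewrite mulkm // IH mulrS; ring.
Qed.

Lemma dot_powl m (P R : 'M[algC]_m.+2) K : shp P ->
  dot (mpow P K) R = K%:R * dot P R.
Proof.
move=> sP; rewrite /dot mulr_sumr; apply: eq_bigr => k mk.
by rewrite pow0k // mulrA.
Qed.

Lemma dot_powr m (P R : 'M[algC]_m.+2) K : shp P ->
  dot R (mpow P K) = K%:R * dot R P.
Proof.
move=> sP; rewrite /dot mulr_sumr; apply: eq_bigr => k mk.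
by rewrite powkm // mulrCA.
Qed.

Lemma pow0m m (P : 'M[algC]_m.+2) K : shp P ->
  (mpow P K) ord0 ord_max = K%:R * P ord0 ord_max + (K%:R * (K%:R - 1) / 2) * dot P P.
Proof.
move=> sP; elim: K => [|K IH] /=.
  by rewrite mxE eq_sym (negbTE (max_neq0 m)) !mul0r addr0.
have sK := shp_pow K sP; rewrite mul0m // IH dot_powr //.
have h2 : (2 : algC) != 0 by rewrite pnatr_eq0.
rewrite mulrS; by field.
Qed.

Lemma cen_pow m (P : 'M[algC]_m.+2) K : shp P -> cen P -> cen (mpow P K).
Proof.
by move=> sP cP k mk; rewrite pow0k // powkm //; case: (cP k mk) => -> ->; rewrite !mulr0.
Qed.

Lemma cen_mul m (P Q : 'M[algC]_m.+2) : shp P -> shp Q -> cen P -> cen Q -> cen (P *m Q).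
Proof.
move=> sP sQ cP cQ k mk; rewrite mul0k // mulkm //.
by case: (cP k mk) => -> ->; case: (cQ k mk) => -> ->; rewrite addr0.
Qed.

Definition good m (P : 'M[algC]_m.+2) := shp P /\ (forall i j, P i j \in in_Qi).

Lemma good_mul m (P Q : 'M[algC]_m.+2) : good P -> good Q -> good (P *m Q).
Proof.
move=> [sP qP] [sQ qQ]; split; first exact: shp_mul.
by move=> i j; rewrite mxE rpred_sum // => k _; rewrite rpredM.
Qed.

Lemma good1 m : good (1%:M : 'M[algC]_m.+2).
Proof. by split; [exact: shp1 | move=> i j; rewrite mxE rpred_nat]. Qed.

Lemma good_pow m (P : 'M[algC]_m.+2) K : good P -> good (mpow P K).
Proof. by move=> gP; elim: K => [|K IH] /=; [exact: good1 | exact: good_mul]. Qed.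

Lemma good_H m (M : 'M[algC]_m.+2) : in_H M -> good M.
Proof.
move=> [hq [h1 h0]]; split; last by move=> i j; exact: hq.
split=> // i j nij i0 jm; apply: h0 => //.
by rewrite (negbTE i0) (negbTE jm) andbF.
Qed.

Definition S1 m t (G : 'I_t -> 'M[algC]_m.+2) P := exists s, word_prod G s = P.

Lemma word_prod_cat m t (G : 'I_t -> 'M[algC]_m.+2) s1 s2 :
  word_prod G (s1 ++ s2) = word_prod G s1 *m word_prod G s2.
Proof.
elim: s1 => [|i s IH] /=; first by rewrite mul1mx.
by rewrite IH mulmxA.
Qed.

Lemma S1_mul m t (G : 'I_t -> 'M[algC]_m.+2) P Q : S1 G P -> S1 G Q -> S1 G (P *m Q).
Proof. by move=> [s <-] [s' <-]; exists (s ++ s'); rewrite word_prod_cat. Qed.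

Lemma sg_mul m t (G : 'I_t -> 'M[algC]_m.+2) P Q :
  in_semigroup G P -> S1 G Q -> in_semigroup G (P *m Q).
Proof.
move=> [s [ne <-]] [s' <-]; exists (s ++ s'); rewrite word_prod_cat; split=> //.
by case: s ne.
Qed.

Lemma S1_1 m t (G : 'I_t -> 'M[algC]_m.+2) : S1 G 1%:M.
Proof. by exists [::]. Qed.

Lemma sg_G m t (G : 'I_t -> 'M[algC]_m.+2) i : in_semigroup G (G i).
Proof. by exists [:: i]; split => //=; rewrite mulmx1. Qed.

Lemma S1_sg m t (G : 'I_t -> 'M[algC]_m.+2) P : in_semigroup G P -> S1 G P.
Proof. by move=> [s [_ <-]]; exists s. Qed.

Lemma S1_pow m t (G : 'I_t -> 'M[algC]_m.+2) P K : S1 G P -> S1 G (mpow P K).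
Proof. by move=> hP; elim: K => [|K IH] /=; [exact: S1_1 | exact: S1_mul]. Qed.

Lemma sg_pow m t (G : 'I_t -> 'M[algC]_m.+2) P K :
  in_semigroup G P -> in_semigroup G (mpow P K.+1).
Proof. by move=> hP /=; apply: sg_mul => //; apply: S1_pow; exact: S1_sg. Qed.

Lemma good_S1 m t (G : 'I_t -> 'M[algC]_m.+2) P :
  (forall i, in_H (G i)) -> S1 G P -> good P.
Proof.
move=> hG [s <-]; elim: s => [|i s IH] /=; first exact: good1.
by apply: good_mul => //; apply: good_H.
Qed.

Lemma cen_one m (P : 'M[algC]_m.+2) : shp P -> cen P -> P ord0 ord_max = 0 -> P = 1%:M.
Proof.
move=> [P1 P0] cP c0; apply/matrixP => i j; rewrite mxE.
case: (eqVneq i j) => [<-|nij]; first by rewrite P1.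
case: (eqVneq i ord0) => [i0|i0]; last case: (eqVneq j ord_max) => [jm|jm]; last by rewrite P0.
- subst i; case: (eqVneq j ord_max) => [->//|jm].
  have mj : mid_idx j by rewrite mid_iff jm andbT eq_sym.
  by case: (cP j mj).
- subst j; have mi : mid_idx i by rewrite mid_iff i0 nij.
  by case: (cP i mi).
Qed.

Definition prodl m t (F : 'I_t -> 'M[algC]_m.+2) (r : seq 'I_t) :=
  foldr (fun j A => F j *m A) 1%:M r.

Lemma good_prodl m t (F : 'I_t -> 'M[algC]_m.+2) r :
  (forall j, good (F j)) -> good (prodl F r).
Proof. by move=> gF; elim: r => [|j r IH] /=; [exact: good1 | exact: good_mul]. Qed.

Lemma S1_prodl m t (G F : 'I_t -> 'M[algC]_m.+2) r :
  (forall j, S1 G (F j)) -> S1 G (prodl F r).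
Proof. by move=> gF; elim: r => [|j r IH] /=; [exact: S1_1 | exact: S1_mul]. Qed.

Lemma prodl0k m t (F : 'I_t -> 'M[algC]_m.+2) r k :
  (forall j, shp (F j)) -> mid_idx k ->
  (prodl F r) ord0 k = \sum_(j <- r) F j ord0 k.
Proof.
move=> sF mk; elim: r => [|j r IH] /=.
  by rewrite big_nil mxE; move: mk; rewrite mid_iff eq_sym => /andP[/negbTE -> _].
have sr : shp (prodl F r) by elim: (r) => [|? ? ?] /=; [exact: shp1 | exact: shp_mul].
by rewrite big_cons mul0k // IH.
Qed.

Lemma prodlkm m t (F : 'I_t -> 'M[algC]_m.+2) r k :
  (forall j, shp (F j)) -> mid_idx k ->
  (prodl F r) k ord_max = \sum_(j <- r) F j k ord_max.
Proof.
move=> sF mk; elim: r => [|j r IH] /=.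
  by rewrite big_nil mxE; move: mk; rewrite mid_iff => /andP[_ /negbTE ->].
have sr : shp (prodl F r) by elim: (r) => [|? ? ?] /=; [exact: shp1 | exact: shp_mul].
by rewrite big_cons mulkm // IH.
Qed.

Lemma exX m t (G : 'I_t -> 'M[algC]_m.+2) :
  (forall i, non_redundant G i) ->
  exists X : 'I_t -> nat, (forall j, (1 <= X j)%N) /\
    (forall k, mid_idx k -> \sum_j (X j)%:R * G j ord0 k = 0) /\
    (forall k, mid_idx k -> \sum_j (X j)%:R * G j k ord_max = 0).
Proof.
move=> nr.
suff H : forall r : seq 'I_t, exists X : 'I_t -> nat,
    (forall j, j \in r -> (1 <= X j)%N) /\
    ((forall k, mid_idx k -> \sum_j (X j)%:R * G j ord0 k = 0) /\
    (forall k, mid_idx k -> \sum_j (X j)%:R * G j k ord_max = 0)).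
  have [X [h1 h2]] := H (enum 'I_t).
  by exists X; split=> // j; apply: h1; rewrite mem_enum.
elim=> [|i r [X' [h1 [h2 h3]]]].
  by exists (fun _ => 0%N); split=> //; split=> k _; rewrite big1 // => j _; rewrite mul0r.
have [x [xi [x2 x3]]] := nr i.
exists (fun j => x j + X' j)%N; split.
  move=> j; rewrite in_cons => /orP[/eqP ->|jr]; first by rewrite (leq_trans xi) ?leq_addr.
  by rewrite (leq_trans (h1 j jr)) ?leq_addl.
split=> k mk.
  by rewrite (eq_bigr (fun j => (x j)%:R * G j ord0 k + (X' j)%:R * G j ord0 k)) ?big_split /= ?x2 ?h2 ?addr0 // => j _; rewrite natrD mulrDl.
by rewrite (eq_bigr (fun j => (x j)%:R * G j k ord_max + (X' j)%:R * G j k ord_max)) ?big_split /= ?x3 ?h3 ?addr0 // => j _; rewrite natrD mulrDl.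
Qed.

Definition Rm m t (G : 'I_t -> 'M[algC]_m.+2) (X : 'I_t -> nat) (i : 'I_t) :=
  prodl (fun j => mpow (G j) (X j - (j == i))) (index_enum 'I_t).

Lemma sum_delta t (f : 'I_t -> algC) i : \sum_j (j == i)%:R * f j = f i.
Proof.
rewrite (bigD1 i) //= eqxx mul1r big1 ?addr0 // => j /negbTE ->.
by rewrite mul0r.
Qed.

Lemma Rm_props m t (G : 'I_t -> 'M[algC]_m.+2) (X : 'I_t -> nat) i :
  (forall j, in_H (G j)) -> (forall j, (1 <= X j)%N) ->
  (forall k, mid_idx k -> \sum_j (X j)%:R * G j ord0 k = 0) ->
  (forall k, mid_idx k -> \sum_j (X j)%:R * G j k ord_max = 0) ->
  [/\ S1 G (Rm G X i), good (Rm G X i) & cen (G i *m Rm G X i)].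
Proof.
move=> hG X1 b1 b2.
have gG j : good (G j) by apply: good_H.
have sG j : shp (G j) by case: (gG j).
have sF j : shp (mpow (G j) (X j - (j == i))) by apply: shp_pow.
have le j : ((j == i) <= X j)%N by case: (j == i) => //; apply: X1.
split.
- apply: S1_prodl => j; apply: S1_pow; apply: S1_sg; exact: sg_G.
- by apply: good_prodl => j; apply: good_pow.
- have sR : shp (Rm G X i) by case: (good_prodl (index_enum 'I_t) (fun j => good_pow (X j - (j == i)) (gG j))).
  move=> k mk; rewrite mul0k // mulkm //; split.
    rewrite /Rm prodl0k //.
    rewrite (eq_bigr (fun j => (X j)%:R * G j ord0 k - (j == i)%:R * G j ord0 k)); last first.
      by move=> j _; rewrite pow0k // natrB // mulrBl.
    by rewrite sumrB b1 // sum_delta sub0r addrN.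
  rewrite /Rm prodlkm //.
  rewrite (eq_bigr (fun j => (X j)%:R * G j k ord_max - (j == i)%:R * G j k ord_max)); last first.
    by move=> j _; rewrite powkm // natrB // mulrBl.
  by rewrite sumrB b2 // sum_delta sub0r addrN.
Qed.

Lemma Ylem m (P P' Q Q' : 'M[algC]_m.+2) K :
  shp P -> shp P' -> shp Q -> shp Q' -> cen (P *m P') -> cen (Q *m Q') ->
  let Y := mpow P K *m mpow Q K *m mpow P' K *m mpow Q' K in
  cen Y /\
  Y ord0 ord_max = K%:R * (P ord0 ord_max + Q ord0 ord_max + P' ord0 ord_max
     + Q' ord0 ord_max - dot P P - dot Q Q) + K%:R ^+ 2 * (dot P Q - dot Q P).
Proof.
move=> sP sP' sQ sQ' cP cQ Y.
have s1 := shp_pow K sP; have s2 := shp_pow K sQ.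
have s3 := shp_pow K sP'; have s4 := shp_pow K sQ'.
have s12 := shp_mul s1 s2; have s123 := shp_mul s12 s3.
split.
  move=> k mk; rewrite /Y !mul0k // !mulkm // !pow0k // !powkm //.
  case: (cP k mk); rewrite mul0k // mulkm // => e1 e2.
  case: (cQ k mk); rewrite mul0k // mulkm // => e3 e4.
  have -> : P' ord0 k = - P ord0 k by apply/eqP; rewrite -addr_eq0 addrC e1.
  have -> : Q' ord0 k = - Q ord0 k by apply/eqP; rewrite -addr_eq0 addrC e3.
  have -> : P' k ord_max = - P k ord_max by apply/eqP; rewrite -addr_eq0 addrC e2.
  have -> : Q' k ord_max = - Q k ord_max by apply/eqP; rewrite -addr_eq0 addrC e4.
  by split; ring.
have dPl R : dot P' R = - dot P R.
  by apply/eqP; rewrite -addr_eq0 addrC -dotMl // dot_cenl.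
have dQl R : dot Q' R = - dot Q R.
  by apply/eqP; rewrite -addr_eq0 addrC -dotMl // dot_cenl.
have dPr R : dot R P' = - dot R P.
  by apply/eqP; rewrite -addr_eq0 addrC -dotMr // dot_cenr.
have dQr R : dot R Q' = - dot R Q.
  by apply/eqP; rewrite -addr_eq0 addrC -dotMr // dot_cenr.
rewrite /Y !mul0m // !dotMl // !dot_powl // !dot_powr // !pow0m //.
rewrite !dPl !dQl !dPr !dQr.
have h2 : (2 : algC) != 0 by rewrite pnatr_eq0.
by field.
Qed.
Lemma rat_comb (d1 d2 v : algC) : in_Qi d1 -> in_Qi d2 -> in_Qi v ->
  ~ same_angle d1 d2 ->
  exists q p p' : int, 0 < q /\ q%:~R * v = p%:~R * d1 + p'%:~R * d2.
Proof.
move=> /andP[rx1 ry1] /andP[rx2 ry2] /andP[rx ry] hna.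
have d1n : d1 != 0 by apply/eqP => e; apply: hna; left.
have d2n : d2 != 0 by apply/eqP => e; apply: hna; right; left.
set x1 := 'Re d1 in rx1; set y1 := 'Im d1 in ry1.
set x2 := 'Re d2 in rx2; set y2 := 'Im d2 in ry2.
set x := 'Re v in rx; set y := 'Im v in ry.
have e1 : d1 = x1 + 'i * y1 by exact: Crect.
have e2 : d2 = x2 + 'i * y2 by exact: Crect.
have ev : v = x + 'i * y by exact: Crect.
have det0 : x1 * y2 - x2 * y1 != 0.
  apply/negP => /eqP h; apply: hna; right; right.
  have rx1' : x1 \is Num.real by exact: Creal_Re.
  have ry1' : y1 \is Num.real by exact: Creal_Im.
  have rx2' : x2 \is Num.real by exact: Creal_Re.
  have ry2' : y2 \is Num.real by exact: Creal_Im.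
  case: (eqVneq x2 0) => [x20|x2n].
    have y2n : y2 != 0.
      by apply/eqP => y20; move: d2n; rewrite e2 x20 y20 mulr0 addr0 eqxx.
    have x10 : x1 = 0.
      by move: h; rewrite x20 mul0r subr0 => /eqP; rewrite mulf_eq0 (negbTE y2n) orbF => /eqP.
    exists (y1 / y2); split; first by rewrite rpred_div.
    by rewrite e1 e2 x10 x20; field.
  exists (x1 / x2); split; first by rewrite rpred_div.
  apply/eqP; rewrite -subr_eq0 e1 e2.
  have -> : x1 + 'i * y1 - x1 / x2 * (x2 + 'i * y2) = - 'i * (x1 * y2 - x2 * y1) / x2 by field.
  by rewrite h mulr0 mul0r.
set al := (x * y2 - y * x2) / (x1 * y2 - x2 * y1).
set be := (x1 * y - y1 * x) / (x1 * y2 - x2 * y1).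
have eab : v = al * d1 + be * d2.
  by rewrite ev e1 e2 /al /be; field.
have ral : al \in Crat by rewrite rpred_div ?rpredB ?rpredM.
have rbe : be \in Crat by rewrite rpred_div ?rpredB ?rpredM.
have [a ea] := CratP _ ral.
have [b eb] := CratP _ rbe.
have ha : ratr a * (denq a)%:~R = (numq a)%:~R :> algC.
  by rewrite -[(numq _)%:~R]ratr_int numqE rmorphM /= ratr_int.
have hb : ratr b * (denq b)%:~R = (numq b)%:~R :> algC.
  by rewrite -[(numq _)%:~R]ratr_int numqE rmorphM /= ratr_int.
exists (denq a * denq b), (numq a * denq b), (numq b * denq a); split.
  by rewrite mulr_gt0 ?denq_gt0.
rewrite eab ea eb !intrM -ha -hb; ring.
Qed.

Lemma int_nat (p : int) (K qn : nat) : (`|p| < K)%N -> (0 < qn)%N ->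
  ((`|(K * qn)%:Z - p|%N)%:Z = (K*qn)%:Z - p) /\ (0 < `|(K * qn)%:Z - p|)%N.
Proof.
move=> h1 h2; have h3 : (K <= K * qn)%N by rewrite leq_pmulr.
move: (K*qn)%N h3 => N h3; split; lia.
Qed.

Lemma cast_nat (n : nat) (z : int) : n%:Z = z -> (n%:R : algC) = z%:~R.
Proof. by move=> <-. Qed.

Theorem lemma5 (m t : nat) (G : 'I_t -> 'M[algC]_m.+2) :
  (forall i, in_H (G i)) ->
  (forall i, non_redundant G i) ->
  (exists i1 i2 i3 i4 : 'I_t,
     ~ same_angle (comm (G i1) (G i2)) (comm (G i3) (G i4))) ->
  in_semigroup G 1%:M.
Proof.
move=> hG nr [i1 [i2 [i3 [i4 hna]]]].
have [X [X1 [b1 b2]]] := exX nr.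
have RP i := @Rm_props m t G X i hG X1 b1 b2.
set R := Rm G X in RP.
have gG j : good (G j) by apply: good_H.
have sG j : shp (G j) by case: (gG j).
have gR j : good (R j) by case: (RP j).
have sR j : shp (R j) by case: (gR j).
have S1R j : S1 G (R j) by case: (RP j).
have cR j : cen (G j *m R j) by case: (RP j).
pose w i j := G i ord0 ord_max + G j ord0 ord_max + R i ord0 ord_max
   + R j ord0 ord_max - dot (G i) (G i) - dot (G j) (G j).
pose Y i j K := mpow (G i) K *m mpow (G j) K *m mpow (R i) K *m mpow (R j) K.
have hY i j K : cen (Y i j K) /\ (Y i j K) ord0 ord_max =
    K%:R * w i j + K%:R ^+ 2 * (dot (G i) (G j) - dot (G j) (G i)).
  by have := @Ylem m (G i) (R i) (G j) (R j) K (sG i) (sR i) (sG j) (sR j) (cR i) (cR j).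
have sY i j K : shp (Y i j K).
  by rewrite /Y; apply: shp_mul; [apply: shp_mul; [apply: shp_mul|]|]; exact: shp_pow.
have gY i j K : in_semigroup G (Y i j K.+1).
  rewrite /Y; apply: sg_mul; [apply: sg_mul; [apply: sg_mul|]|].
  - by apply: sg_pow; apply: sg_G.
  - by apply: S1_pow; apply: S1_sg; apply: sg_G.
  - exact: S1_pow.
  - exact: S1_pow.
have comm_dot i j : comm (G i) (G j) = dot (G i) (G j) - dot (G j) (G i).
  by rewrite /comm /dot sumrB.
have qd (P Q : 'M[algC]_m.+2) : good P -> good Q -> dot P Q \in in_Qi.
  by move=> [_ qP] [_ qQ]; rewrite rpred_sum // => k _; rewrite rpredM.
have qw i j : w i j \in in_Qi.
  have qe (P : 'M[algC]_m.+2) : good P -> P ord0 ord_max \in in_Qi by case.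
  by rewrite /w !(rpredB, rpredD) ?qd ?qe.
have qc i j : comm (G i) (G j) \in in_Qi by rewrite comm_dot rpredB ?qd.
have [q [p [p' [q0 hq]]]] := rat_comb (qc i1 i2) (qc i3 i4) (rpredD (qw i1 i2) (qw i3 i4)) hna.
have [qn [eq qn0]] : exists qn : nat, q = qn%:Z /\ (0 < qn)%N.
  by exists `|q|%N; split; lia.
subst q.
pose K := (`|p| + `|p'|)%N.+1.
have Kp : (`|p| < K)%N by rewrite /K ltnS leq_addr.
have Kp' : (`|p'| < K)%N by rewrite /K ltnS leq_addl.
have Kpn : (`|- p| < K)%N by rewrite abszN.
have Kpn' : (`|- p'| < K)%N by rewrite abszN.
have [c1 n1pos] := int_nat Kp qn0.
have [c2 _] := int_nat Kpn qn0.
have [c3 _] := int_nat Kp' qn0.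
have [c4 _] := int_nat Kpn' qn0.
move: n1pos c1 c2 c3 c4.
set n1 := `|_ - p|%N; set n2 := `|_ - - p|%N; set n3 := `|_ - p'|%N; set n4 := `|_ - - p'|%N.
move=> n1pos c1 c2 c3 c4.
pose Z1 := Y i1 i2 K; pose Z2 := Y i2 i1 K; pose Z3 := Y i3 i4 K; pose Z4 := Y i4 i3 K.
pose F := mpow Z1 n1 *m mpow Z2 n2 *m mpow Z3 n3 *m mpow Z4 n4.
have -> : (1%:M : 'M[algC]_m.+2) = F.
  have sZ1 := shp_pow n1 (sY i1 i2 K); have sZ2 := shp_pow n2 (sY i2 i1 K).
  have sZ3 := shp_pow n3 (sY i3 i4 K); have sZ4 := shp_pow n4 (sY i4 i3 K).
  have [cY1 hY1] := hY i1 i2 K; have [cY2 hY2] := hY i2 i1 K.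
  have [cY3 hY3] := hY i3 i4 K; have [cY4 hY4] := hY i4 i3 K.
  have cZ1 := cen_pow n1 (sY i1 i2 K) cY1; have cZ2 := cen_pow n2 (sY i2 i1 K) cY2.
  have cZ3 := cen_pow n3 (sY i3 i4 K) cY3; have cZ4 := cen_pow n4 (sY i4 i3 K) cY4.
  have s12 := shp_mul sZ1 sZ2; have s123 := shp_mul s12 sZ3.
  have c12 := cen_mul sZ1 sZ2 cZ1 cZ2; have c123 := cen_mul s12 sZ3 c12 cZ3.
  apply/esym/cen_one.
  - by rewrite /F; apply: shp_mul.
  - exact: cen_mul.
  have sY1 := sY i1 i2 K; have sY2 := sY i2 i1 K; have sY3 := sY i3 i4 K; have sY4 := sY i4 i3 K.
  rewrite /F !mul0m // (dot_cenl _ cZ1) (dot_cenl _ c12) (dot_cenl _ c123) !pow0m //.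
  rewrite /Z1 /Z2 /Z3 /Z4 (dot_cenl _ cY1) (dot_cenl _ cY2) (dot_cenl _ cY3) (dot_cenl _ cY4) !mulr0 !addr0.
  rewrite hY1 hY2 hY3 hY4.
  rewrite (cast_nat c1) (cast_nat c2) (cast_nat c3) (cast_nat c4).
  rewrite !comm_dot in hq.
  rewrite /w in hq *.
  rewrite -[RHS](mulr0 (2%:R * K%:R ^+ 2)) -(subrr (p%:~R * (dot (G i1) (G i2) - dot (G i2) (G i1)) + p'%:~R * (dot (G i3) (G i4) - dot (G i4) (G i3)))).
  rewrite -{1}hq !intrB /=. ring.
have [n1' en1] : exists n1', n1 = n1'.+1 by exists n1.-1; rewrite prednK.
rewrite /F; apply: sg_mul; [apply: sg_mul; [apply: sg_mul|]|].
- by rewrite en1; apply: sg_pow; exact: gY.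
all: by apply: S1_pow; apply: S1_sg; exact: gY.
Qed.
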